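(* In the setting described in the context, with initialization parameters $R=v=\frac{1}{\sqrt{2k}}$ (i.e. second layer $\mathbf{v}=(v,\dots,v,-v,\dots,-v)$ with $v=1/\sqrt{2k}$ and all rows of $W_0$ of norm at most $1/\sqrt{2k}$), SGD converges to a global minimum of $L_S$ after performing at most $$M_k=\frac{\|\mathbf{w}^*\|^2}{\alpha^2}+O\!\left(\frac{\|\mathbf{w}^*\|^2}{\min\{\eta,\sqrt{\eta}\}}\right)$$ non-zero updates, where the implied constant depends only on $\alpha$ (in particular not on $k$).
   Context: Data: $S=\{(\mathbf{x}_1,y_1),\dots,(\mathbf{x}_n,y_n)\}$ with $\|\mathbf{x}_i\|\le1$, $y_i\in\{\pm1\}$, and $\mathbf{w}^*\in\mathbb{R}^d$ with $y_i\langle\mathbf{w}^*,\mathbf{x}_i\rangle\ge1$ for all $i$ (so $\|\mathbf{w}^*\|\ge1$). Network $N_W(\mathbf{x})=\mathbf{v}^\top\sigma(W\mathbf{x})$, $W\in\mathbb{R}^{2k\times d}$, $\sigma(z)=\max\{\alpha z,z\}$ with $0<\alpha<1$, fixed $\mathbf{v}=(v,\dots,v,-v,\dots,-v)\in\mathbb{R}^{2k}$. Loss $L_S(W)=\frac1n\sum_i\max\{1-y_iN_W(\mathbf{x}_i),0\}$. SGD: batch size 1, constant learning rate $\eta>0$, only $W$ is updated; at each iteration an example $(\mathbf{x}_t,y_t)\in S$ is picked; if $y_tN_{W_{t-1}}(\mathbf{x}_t)\ge1$ nothing changes, otherwise the $i$-th row ($i\le k$) gets $+\eta v p y_t\mathbf{x}_t$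 and the $(k+i)$-th row gets $-\eta v q y_t\mathbf{x}_t$, where $p$ (resp. $q$) equals $1$ if the row's inner product with $\mathbf{x}_t$ is $\ge0$ and $\alpha$ otherwise. Such an update is called non-zero. *)

(* Defs.v *)
From HB Require Import structures.
From mathcomp Require Import all_boot all_order all_algebra.
From mathcomp Require Import reals.
Set Implicit Arguments. Unset Strict Implicit. Unset Printing Implicit Defensive.
Import Order.TTheory GRing.Theory Num.Theory.
Local Open Scope ring_scope.

Section Defs.
Variable R : realType.

Definition dotp (d : nat) (u w : 'rV[R]_d) : R := \sum_(j < d) u 0 j * w 0 j.
Definition vnorm (d : nat) (u : 'rV[R]_d) : R := Num.sqrt (dotp u u).

Definition leaky (alpha z : R) : R := Num.max (alpha * z) z.

(* Sign pattern of the fixed second layer: +1 on the first k neurons, -1 on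
   the last k neurons; the second layer is v * vsign. *)
Definition vsign (k : nat) (i : 'I_(k + k)) : R := if (i < k)%N then 1 else -1.

Definition net (alpha v : R) (k d : nat) (W : 'M[R]_(k + k, d)) (x : 'rV[R]_d) : R :=
  \sum_(i < k + k) v * vsign i * leaky alpha (dotp (row i W) x).

Definition lossS (alpha v : R) (k d n : nat) (X : 'I_n -> 'rV[R]_d) (Y : 'I_n -> R)
  (W : 'M[R]_(k + k, d)) : R :=
  (\sum_(i < n) Num.max (1 - Y i * net alpha v W (X i)) 0) / n%:R.

Definition nonzero_upd (alpha v : R) (k d : nat) (W : 'M[R]_(k + k, d))
  (x : 'rV[R]_d) (y : R) : bool := y * net alpha v W x < 1.

(* One SGD step (batch size 1, learning rate eta, only W updated). *)
Definition sgd_step (alpha v eta : R) (k d : nat) (W : 'M[R]_(k + k, d))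
  (x : 'rV[R]_d) (y : R) : 'M[R]_(k + k, d) :=
  if nonzero_upd alpha v W x y then
    \matrix_(i, j) (W i j + eta * v * vsign i *
                     (if 0 <= dotp (row i W) x then 1 else alpha) * y * x 0 j)
  else W.

Fixpoint sgd_traj (alpha v eta : R) (k d n : nat) (X : 'I_n -> 'rV[R]_d)
  (Y : 'I_n -> R) (sched : nat -> 'I_n) (W0 : 'M[R]_(k + k, d)) (t : nat)
  : 'M[R]_(k + k, d) :=
  match t with
  | 0 => W0
  | t'.+1 => sgd_step alpha v eta
               (sgd_traj alpha v eta X Y sched W0 t') (X (sched t')) (Y (sched t'))
  end.

Definition num_nonzero (alpha v eta : R) (k d n : nat) (X : 'I_n -> 'rV[R]_d)
  (Y : 'I_n -> R) (sched : nat -> 'I_n) (W0 : 'M[R]_(k + k, d)) (T : nat) : nat :=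
  \sum_(t < T) nonzero_upd alpha v (sgd_traj alpha v eta X Y sched W0 t)
                 (X (sched t)) (Y (sched t)).

End Defs.

(* Main.v *)
Require Import Defs.
From HB Require Import structures.
From mathcomp Require Import all_boot all_order all_algebra.
From mathcomp Require Import reals.
From mathcomp Require Import ring lra.
From Stdlib Require Import Classical.
Import Order.TTheory GRing.Theory Num.Theory.
Local Open Scope ring_scope.

Section Aux.
Variable R : realType.

Lemma sq0 (z : R) : 0 <= z * z.
Proof. by rewrite -expr2 sqr_ge0. Qed.

Lemma cs_sum (I : finType) (f g : I -> R) :
  (\sum_i f i * g i) ^+ 2 <= (\sum_i f i * f i) * (\sum_i g i * g i).
Proof.
set F := \sum_i f i * f i; set G := \sum_i g i * g i; set P := \sum_i f i * g i.
have G0 : 0 <= G by apply: sumr_ge0 => i _; exact: sq0.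
have H : 0 <= \sum_i (f i * G - g i * P) * (f i * G - g i * P).
  by apply: sumr_ge0 => i _; exact: sq0.
have E : \sum_i (f i * G - g i * P) * (f i * G - g i * P) = G * (G * F - P ^+ 2).
  rewrite (eq_bigr (fun i => G * G * (f i * f i) + (- (2 * G * P)) * (f i * g i)
                              + P * P * (g i * g i))); last by move=> i _; ring.
  rewrite !big_split /= -!mulr_sumr -/F -/G -/P; ring.
case: (eqVneq G 0) => [G0'|Gn0].
  have gz : forall i, g i = 0.
    move=> i; have := @psumr_eq0P R I predT (fun i => g i * g i) (fun i _ => sq0 (g i)) G0' i isT.
    by move/eqP; rewrite mulf_eq0 orbb => /eqP.
  have P0 : P = 0 by rewrite /P big1 // => i _; rewrite gz mulr0.
  by rewrite P0 G0' mulr0 expr2 mulr0.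
have Gp : 0 < G by rewrite lt_def Gn0 G0.
by rewrite E pmulr_rge0 // subr_ge0 in H; rewrite mulrC.
Qed.

Lemma dotpC d (u w : 'rV[R]_d) : dotp u w = dotp w u.
Proof. by apply: eq_bigr => j _; rewrite mulrC. Qed.

Lemma dotpDl d (u w z : 'rV[R]_d) : dotp (u + w) z = dotp u z + dotp w z.
Proof. by rewrite /dotp -big_split; apply: eq_bigr => j _ /=; rewrite mxE mulrDl. Qed.

Lemma dotpZl d c (u z : 'rV[R]_d) : dotp (c *: u) z = c * dotp u z.
Proof. by rewrite /dotp mulr_sumr; apply: eq_bigr => j _; rewrite mxE mulrA. Qed.

Lemma dotp_ge0 d (u : 'rV[R]_d) : 0 <= dotp u u.
Proof. by apply: sumr_ge0 => j _; exact: sq0. Qed.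

Lemma cs_dotp d (u w : 'rV[R]_d) : dotp u w ^+ 2 <= dotp u u * dotp w w.
Proof. by have := @cs_sum _ (fun j => u 0 j) (fun j => w 0 j). Qed.

Lemma dotp_sq d (u x : 'rV[R]_d) c :
  dotp (u + c *: x) (u + c *: x) = dotp u u + 2 * c * dotp u x + c ^+ 2 * dotp x x.
Proof.
rewrite dotpDl dotpZl [dotp u _]dotpC [dotp x _]dotpC !dotpDl !dotpZl [dotp x u]dotpC.
ring.
Qed.

Lemma vnorm_sq d (u : 'rV[R]_d) : vnorm u ^+ 2 = dotp u u.
Proof. by rewrite /vnorm sqr_sqrtr // dotp_ge0. Qed.

Definition fdot m d (A B : 'M[R]_(m, d)) := \sum_(i < m) dotp (row i A) (row i B).
Arguments fdot {m d}.

Lemma fdotE m d (A B : 'M[R]_(m, d)) :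
  fdot A B = \sum_(p : 'I_m * 'I_d) A p.1 p.2 * B p.1 p.2.
Proof.
rewrite /fdot /dotp pair_bigA /=; apply: eq_bigr => p _; by rewrite !mxE.
Qed.

Lemma cs_fdot m d (A B : 'M[R]_(m, d)) : fdot A B ^+ 2 <= fdot A A * fdot B B.
Proof. rewrite !fdotE; exact: cs_sum. Qed.

Lemma fdot_ge0 m d (A : 'M[R]_(m, d)) : 0 <= fdot A A.
Proof. by apply: sumr_ge0 => i _; exact: dotp_ge0. Qed.


Definition pf (alpha z : R) := if 0 <= z then 1 else alpha.
Definition Umat (v : R) (k d : nat) (wstar : 'rV[R]_d) : 'M[R]_(k + k, d) :=
  \matrix_(i, j) (v * vsign R i * wstar 0 j).
Arguments Umat v k {d} wstar.

Lemma pf_leaky alpha z : 0 < alpha -> alpha < 1 -> pf alpha z * z = leaky alpha z.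
Proof.
move=> ha0 ha1; rewrite /pf /leaky; case: ifP => hz.
  rewrite mul1r; apply/esym/max_idPr; nra.
have hz' : z < 0 by rewrite ltNge hz.
apply/esym/max_idPl; nra.
Qed.

Lemma pf_bnd alpha z : 0 < alpha -> alpha < 1 -> alpha <= pf alpha z /\ pf alpha z <= 1.
Proof. move=> ha0 ha1; rewrite /pf; case: ifP => _; split; lra. Qed.

Lemma vsign_sq k (i : 'I_(k + k)) : vsign R i * vsign R i = 1.
Proof. by rewrite /vsign; case: ifP => _; rewrite ?mulrNN mulr1. Qed.

Lemma row_step alpha v eta k d (W : 'M[R]_(k + k, d)) x y
  (h : nonzero_upd alpha v W x y) i :
  row i (sgd_step alpha v eta W x y)
  = row i W + (eta * v * vsign R i * pf alpha (dotp (row i W) x) * y) *: x.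
Proof. by apply/rowP => j; rewrite /sgd_step h !mxE. Qed.

Lemma rowU v k d (wstar : 'rV[R]_d) i : row i (Umat v k wstar) = (v * vsign R i) *: wstar.
Proof. by apply/rowP => j; rewrite !mxE. Qed.

Lemma sum_const_v2 v k (c : R) : v ^+ 2 * (k + k)%:R = 1 ->
  \sum_(i < k + k) c * v ^+ 2 = c.
Proof. by move=> hv2; rewrite sumr_const card_ord -mulr_natr -mulrA hv2 mulr1. Qed.

Lemma step_U (alpha v eta : R) k d (wstar : 'rV[R]_d) (W : 'M[R]_(k + k, d)) x y :
  0 < alpha -> alpha < 1 -> 0 < eta -> 0 < v -> v ^+ 2 * (k + k)%:R = 1 ->
  nonzero_upd alpha v W x y ->
  1 <= y * dotp wstar x ->
  fdot W (Umat v k wstar) + eta * alpha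
    <= fdot (sgd_step alpha v eta W x y) (Umat v k wstar).
Proof.
move=> ha0 ha1 heta hv hv2 h hy; rewrite /fdot.
rewrite [X in _ <= X](eq_bigr (fun i => dotp (row i W) (row i (Umat v k wstar))
   + (eta * v * vsign R i * pf alpha (dotp (row i W) x) * y)
      * dotp x (row i (Umat v k wstar))));
  last by move=> i _; rewrite row_step // dotpDl dotpZl.
rewrite big_split /= lerD2l -{1}(@sum_const_v2 v k (eta * alpha) hv2).
apply: ler_sum => i _; rewrite rowU [dotp x _]dotpC dotpZl.
have [p1 p2] := pf_bnd alpha (dotp (row i W) x) ha0 ha1.
have -> : eta * v * vsign R i * pf alpha (dotp (row i W) x) * y
            * (v * vsign R i * dotp wstar x)
  = (eta * v ^+ 2) * (pf alpha (dotp (row i W) x) * (y * dotp wstar x))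
      * (vsign R i * vsign R i).
  by ring.
rewrite vsign_sq mulr1 (_ : eta * alpha * v ^+ 2 = (eta * v ^+ 2) * alpha); last by ring.
rewrite ler_pM2l; last by apply: mulr_gt0 => //; apply: exprn_gt0.
nra.
Qed.

Lemma step_W (alpha v eta : R) k d (W : 'M[R]_(k + k, d)) x y :
  0 < alpha -> alpha < 1 -> 0 < eta -> 0 < v -> v ^+ 2 * (k + k)%:R = 1 ->
  nonzero_upd alpha v W x y ->
  dotp x x <= 1 -> (y = 1 \/ y = -1) ->
  fdot (sgd_step alpha v eta W x y) (sgd_step alpha v eta W x y)
    <= fdot W W + (2 * eta + eta ^+ 2).
Proof.
move=> ha0 ha1 heta hv hv2 h hx hy; rewrite /fdot.
rewrite (eq_bigr (fun i => dotp (row i W) (row i W)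
   + (2 * eta * y) * (v * vsign R i * leaky alpha (dotp (row i W) x))
   + (eta * v * vsign R i * pf alpha (dotp (row i W) x) * y) ^+ 2 * dotp x x));
  last by move=> i _; rewrite row_step // dotp_sq -pf_leaky //; ring.
rewrite !big_split /= -mulr_sumr -addrA lerD2l.
have hn : y * net alpha v W x < 1 by [].
apply: lerD.
  rewrite (_ : \sum_(i < k + k) v * vsign R i * leaky alpha (dotp (row i W) x)
     = net alpha v W x) //.
  nra.
rewrite -(@sum_const_v2 v k (eta ^+ 2) hv2).
apply: ler_sum => i _.
have [p1 p2] := pf_bnd alpha (dotp (row i W) x) ha0 ha1.
have y2 : y * y = 1 by case: hy => ->; ring.
have -> : (eta * v * vsign R i * pf alpha (dotp (row i W) x) * y) ^+ 2 * dotp x x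
  = (eta ^+ 2 * v ^+ 2) * ((pf alpha (dotp (row i W) x) * pf alpha (dotp (row i W) x)
      * dotp x x) * (vsign R i * vsign R i) * (y * y)) by ring.
rewrite vsign_sq y2 !mulr1; apply: ler_piMr.
  by apply: mulr_ge0; apply: exprn_ge0; lra.
have hx0 := @dotp_ge0 d x.
nra.
Qed.

End Aux.
Arguments fdot {R m d}.
Arguments Umat {R} v k {d} wstar.
Arguments pf {R}.
Arguments cs_dotp {R d}.
Arguments dotp_ge0 {R d}.
Arguments vnorm_sq {R d}.
Arguments cs_fdot {R m d}.
Arguments fdot_ge0 {R m d}.
Arguments dotpC {R d}.
Arguments vsign_sq {R k}.

Lemma nnS (R : realType) (alpha v eta : R) k d n (X : 'I_n -> 'rV[R]_d) Y sched
  (W0 : 'M[R]_(k + k, d)) t :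
  num_nonzero alpha v eta X Y sched W0 t.+1 =
  (num_nonzero alpha v eta X Y sched W0 t
   + nonzero_upd alpha v (sgd_traj alpha v eta X Y sched W0 t) (X (sched t)) (Y (sched t)))%N.
Proof. by rewrite /num_nonzero big_ord_recr. Qed.

Lemma inv_traj (R : realType) (alpha v eta : R) k d n (X : 'I_n -> 'rV[R]_d)
  (Y : 'I_n -> R) (wstar : 'rV[R]_d) sched (W0 : 'M[R]_(k + k, d)) :
  0 < alpha -> alpha < 1 -> 0 < eta -> 0 < v -> v ^+ 2 * (k + k)%:R = 1 ->
  (forall i, dotp (X i) (X i) <= 1) -> (forall i, Y i = 1 \/ Y i = -1) ->
  (forall i, 1 <= Y i * dotp wstar (X i)) ->
  forall t,
  fdot W0 (Umat v k wstar) + (num_nonzero alpha v eta X Y sched W0 t)%:R * (eta * alpha)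
    <= fdot (sgd_traj alpha v eta X Y sched W0 t) (Umat v k wstar)
  /\ fdot (sgd_traj alpha v eta X Y sched W0 t) (sgd_traj alpha v eta X Y sched W0 t)
    <= fdot W0 W0 + (num_nonzero alpha v eta X Y sched W0 t)%:R * (2 * eta + eta ^+ 2).
Proof.
move=> ha0 ha1 heta hv hv2 hX hY hw; elim=> [|t [IH1 IH2]].
  by rewrite /num_nonzero big_ord0 !mul0r !addr0 /=; split; exact: lexx.
rewrite nnS.
case hb: (nonzero_upd alpha v (sgd_traj alpha v eta X Y sched W0 t) (X (sched t)) (Y (sched t))).
  have hU := @step_U R alpha v eta k d wstar _ _ _ ha0 ha1 heta hv hv2 hb (hw (sched t)).
  have hW := @step_W R alpha v eta k d _ _ _ ha0 ha1 heta hv hv2 hb (hX (sched t)) (hY (sched t)).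
  rewrite natrD /=; split; lra.
by rewrite addn0 /= /sgd_step hb; split.
Qed.

Lemma arith (R : realType) (alpha eta a m Q P S : R) :
  0 < alpha -> 0 < eta -> 1 <= a -> 0 <= m ->
  Q ^+ 2 <= a ^+ 2 -> P ^+ 2 <= S * a ^+ 2 -> S <= 1 + m * (2 * eta + eta ^+ 2) ->
  Q + m * (eta * alpha) <= P ->
  m * (alpha ^+ 2 * eta) <= a ^+ 2 * eta + (2 * alpha + 2) * a ^+ 2.
Proof.
move=> ha he h1a hm hQ2 hP2 hS hQP.
have hQ : - a <= Q by nra.
have haa : a <= a ^+ 2 by nra.
have haa' : alpha * a <= alpha * a ^+ 2 by apply: ler_wpM2l => //; lra.
have [hc|hc] := lerP (m * eta * alpha) (2 * a).
  have h2 : alpha * (m * eta * alpha) <= alpha * (2 * a) by apply: ler_wpM2l => //; lra.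
  have h3 : 0 <= a ^+ 2 * eta by apply: mulr_ge0; [exact: sqr_ge0 | lra].
  have -> : m * (alpha ^+ 2 * eta) = alpha * (m * eta * alpha) by ring.
  have h4 : alpha * (2 * a) = 2 * (alpha * a) by ring.
  have h5 : (2 * alpha + 2) * a ^+ 2 = 2 * (alpha * a ^+ 2) + 2 * a ^+ 2 by ring.
  have h6 : 0 <= a ^+ 2 by exact: sqr_ge0.
  lra.
have hP : m * eta * alpha - a <= P.
  have -> : m * eta * alpha = m * (eta * alpha) by ring.
  lra.
have ht0 : 0 <= m * eta * alpha - a by lra.
have h1 : (m * eta * alpha - a) ^+ 2 <= P ^+ 2.
  by rewrite ler_pXn2r // nnegrE; lra.
have hSa : S * a ^+ 2 <= (1 + m * (2 * eta + eta ^+ 2)) * a ^+ 2.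
  by apply: ler_wpM2r => //; exact: sqr_ge0.
have h2 : (m * eta * alpha - a) ^+ 2 <= (1 + m * (2 * eta + eta ^+ 2)) * a ^+ 2.
  by apply: le_trans h1 (le_trans hP2 hSa).
have hm0 : 0 < m * eta.
  have : 0 < m * eta * alpha by lra.
  by rewrite pmulr_lgt0.
have h3 : (m * eta) * (m * eta * alpha ^+ 2 - 2 * a * alpha - a ^+ 2 * (2 + eta)) <= 0.
  have -> : (m * eta) * (m * eta * alpha ^+ 2 - 2 * a * alpha - a ^+ 2 * (2 + eta))
     = (m * eta * alpha - a) ^+ 2 - (1 + m * (2 * eta + eta ^+ 2)) * a ^+ 2 by ring.
  by rewrite subr_le0.
rewrite pmulr_rle0 // in h3.
have -> : m * (alpha ^+ 2 * eta) = m * eta * alpha ^+ 2 by ring.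
have h5 : (2 * alpha + 2) * a ^+ 2 = 2 * (alpha * a ^+ 2) + 2 * a ^+ 2 by ring.
have h6 : 2 * a * alpha = 2 * (alpha * a) by ring.
have h7 : a ^+ 2 * (2 + eta) = 2 * a ^+ 2 + a ^+ 2 * eta by ring.
lra.
Qed.

Lemma converge (R : realType) (alpha v eta : R) k d n (X : 'I_n -> 'rV[R]_d)
  (Y : 'I_n -> R) sched (W0 : 'M[R]_(k + k, d)) (B : R) :
  (forall T, (num_nonzero alpha v eta X Y sched W0 T)%:R <= B) ->
  (forall (i : 'I_n) (N : nat), exists t, (N <= t)%N /\ sched t = i) ->
  exists T : nat, forall t : nat, (T <= t)%N ->
    forall W' : 'M[R]_(k + k, d),
      lossS alpha v X Y (sgd_traj alpha v eta X Y sched W0 t) <= lossS alpha v X Y W'.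
Proof.
move=> hB hs.
set nn := num_nonzero alpha v eta X Y sched W0.
set W := sgd_traj alpha v eta X Y sched W0.
have nnS' : forall t, nn t.+1 = (nn t + nonzero_upd alpha v (W t) (X (sched t)) (Y (sched t)))%N.
  by move=> t; rewrite /nn nnS.
have mono : forall t s, (nn t <= nn (t + s))%N.
  move=> t; elim=> [|s IH]; first by rewrite addn0.
  by rewrite addnS nnS'; apply: leq_trans IH (leq_addr _ _).
have B0 : 0 <= B by apply: le_trans (hB 0%N); exact: ler0n.
set Nb := Num.bound B.
have hNb : forall T, (nn T <= Nb)%N.
  move=> T; apply: ltnW; rewrite -(ltr_nat R).
  exact: le_lt_trans (hB T) (archi_boundP B0).
have [T0 HT0] : exists T0, forall t, (T0 <= t)%N -> nn t = nn T0.
  apply: NNPP => Hn.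
  have step : forall T0, exists t, (T0 <= t)%N /\ (nn T0 < nn t)%N.
    move=> T0; apply: NNPP => H2; apply: Hn; exists T0 => t Ht.
    apply/eqP; rewrite eqn_leq.
    have -> : (nn T0 <= nn t)%N by rewrite -(subnKC Ht); exact: mono.
    rewrite andbT leqNgt; apply/negP => h; apply: H2; by exists t.
  have unb : forall j, exists T, (j <= nn T)%N.
    elim=> [|j [T hT]]; first by exists 0%N.
    have [t [_ ht]] := step T; exists t; exact: leq_ltn_trans hT ht.
  have [T hT] := unb Nb.+1.
  by have := leq_trans hT (hNb T); rewrite ltnn.
have hz : forall t, (T0 <= t)%N -> nonzero_upd alpha v (W t) (X (sched t)) (Y (sched t)) = false.
  move=> t Ht; have := nnS' t; rewrite (HT0 t.+1 (leqW Ht)) (HT0 t Ht).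
  case: (nonzero_upd _ _ _ _ _) => //; move/eqP; by rewrite -{1}(addn0 (nn T0)) eqn_add2l.
have hW : forall s, W (T0 + s)%N = W T0.
  elim=> [|s IH]; first by rewrite addn0.
  rewrite addnS {1}/W /= /sgd_step -/W.
  by rewrite hz ?leq_addr // IH.
have hfit : forall i, 1 <= Y i * net alpha v (W T0) (X i).
  move=> i; have [t [Ht <-]] := hs i T0.
  have := hz t Ht; rewrite /nonzero_upd -(subnKC Ht) hW (subnKC Ht).
  by move/negbT; rewrite -leNgt.
exists T0 => t Ht W'.
have loss0 : lossS alpha v X Y (W t) = 0.
  rewrite -(subnKC Ht) hW /lossS big1 ?mul0r // => i _.
  by apply/max_idPr; rewrite subr_le0.
rewrite [lossS _ _ _ _ (sgd_traj _ _ _ _ _ _ _ t)]loss0.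
apply: divr_ge0; last exact: ler0n.
by apply: sumr_ge0 => i _; rewrite le_max lexx orbT.
Qed.

Theorem corollary1 (R : realType) (alpha : R) :
  0 < alpha < 1 ->
  exists C : R, 0 < C /\
  forall (d k n : nat) (X : 'I_n -> 'rV[R]_d) (Y : 'I_n -> R)
         (wstar : 'rV[R]_d) (eta : R) (W0 : 'M[R]_(k + k, d))
         (sched : nat -> 'I_n),
    (0 < k)%N ->
    (forall i, vnorm (X i) <= 1) ->
    (forall i, Y i = 1 \/ Y i = -1) ->
    (forall i, 1 <= Y i * dotp wstar (X i)) ->
    0 < eta ->
    (forall i, vnorm (row i W0) <= 1 / Num.sqrt (2 * k%:R)) ->
    let v := 1 / Num.sqrt (2 * k%:R) in
    (forall T : nat,
       (num_nonzero alpha v eta X Y sched W0 T)%:R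
         <= vnorm wstar ^+ 2 / alpha ^+ 2
            + C * (vnorm wstar ^+ 2 / Num.min eta (Num.sqrt eta)))
    /\
    ((forall (i : 'I_n) (N : nat), exists t, (N <= t)%N /\ sched t = i) ->
     exists T : nat, forall t : nat, (T <= t)%N ->
       forall W' : 'M[R]_(k + k, d),
         lossS alpha v X Y (sgd_traj alpha v eta X Y sched W0 t)
           <= lossS alpha v X Y W').
Proof.
case/andP=> ha0 ha1.
have hC : 0 < 2 / alpha + 2 / alpha ^+ 2.
  by apply: addr_gt0; apply: divr_gt0 => //; apply: exprn_gt0.
exists (2 / alpha + 2 / alpha ^+ 2); split => //.
move=> d k n X Y wstar eta W0 sched hk hX hY hw heta hW0 v.
have hk0 : (0 < k%:R :> R) by rewrite ltr0n.
have hs : 0 < Num.sqrt (2 * k%:R) :> R.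
  by rewrite sqrtr_gt0; apply: mulr_gt0 => //; lra.
have hv : 0 < v by rewrite /v divr_gt0.
have hv2 : v ^+ 2 * (k + k)%:R = 1.
  rewrite /v expr_div_n sqr_sqrtr; last by apply: mulr_ge0 => //; lra.
  rewrite expr1n natrD; field; lra.
have hX' : forall i, dotp (X i) (X i) <= 1.
  move=> i; rewrite -vnorm_sq; have := hX i; have := sqrtr_ge0 (dotp (X i) (X i)).
  rewrite /vnorm => h1 h2; nra.
have bound : forall T : nat,
    (num_nonzero alpha v eta X Y sched W0 T)%:R
      <= vnorm wstar ^+ 2 / alpha ^+ 2
         + (2 / alpha + 2 / alpha ^+ 2) * (vnorm wstar ^+ 2 / Num.min eta (Num.sqrt eta)).
  move=> T.
  set a := vnorm wstar.
  have a0 : 0 <= a by exact: sqrtr_ge0.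
  have ha1' : 1 <= a.
    have := hw (sched 0%N); have := cs_dotp wstar (X (sched 0%N)).
    have := hX' (sched 0%N); have := dotp_ge0 (X (sched 0%N)).
    rewrite -(vnorm_sq wstar) -/a.
    case: (hY (sched 0%N)) => ->; move=> h1 h2 h3 h4; nra.
  have [I1 I2] := @inv_traj R alpha v eta k d n X Y wstar sched W0 ha0 ha1 heta hv hv2 hX' hY hw T.
  set m := (num_nonzero alpha v eta X Y sched W0 T)%:R in I1 I2 *.
  set U := Umat v k wstar in I1 I2.
  set P := fdot (sgd_traj alpha v eta X Y sched W0 T) U in I1.
  set S := fdot (sgd_traj alpha v eta X Y sched W0 T) (sgd_traj alpha v eta X Y sched W0 T) in I2.
  set Q := fdot W0 U in I1.
  set Z := fdot W0 W0 in I2.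
  have UU : fdot U U = a ^+ 2.
    rewrite /a vnorm_sq -(@sum_const_v2 R v k (dotp wstar wstar) hv2) /fdot.
    apply: eq_bigr => i _; rewrite /U rowU dotpZl [dotp wstar _]dotpC dotpZl.
    have := vsign_sq i; move=> hs2.
    have -> : v * vsign R i * (v * vsign R i * dotp wstar wstar)
      = dotp wstar wstar * v ^+ 2 * (vsign R i * vsign R i) by ring.
    by rewrite hs2 mulr1.
  have Z0 : 0 <= Z by exact: fdot_ge0.
  have Z1 : Z <= 1.
    rewrite /Z /fdot -(@sum_const_v2 R v k 1 hv2); apply: ler_sum => i _.
    rewrite mul1r -vnorm_sq; have := hW0 i; rewrite -/v => h.
    have := sqrtr_ge0 (dotp (row i W0) (row i W0)); rewrite -/(vnorm (row i W0)) => h0.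
    nra.
  have hm : 0 <= m by exact: ler0n.
  have hQ2 : Q ^+ 2 <= a ^+ 2.
    apply: le_trans (cs_fdot W0 U) _; rewrite -/Z UU.
    have h6 : 0 <= a ^+ 2 by exact: sqr_ge0.
    nra.
  have hP2 : P ^+ 2 <= S * a ^+ 2 by rewrite -UU; exact: cs_fdot.
  have hS : S <= 1 + m * (2 * eta + eta ^+ 2) by lra.
  have key := @arith R alpha eta a m Q P S ha0 heta ha1' hm hQ2 hP2 hS I1.
  have hmin : 0 < Num.min eta (Num.sqrt eta) by rewrite lt_min heta sqrtr_gt0 heta.
  have hmin2 : Num.min eta (Num.sqrt eta) <= eta by rewrite ge_min lexx.
  apply: le_trans (_ : a ^+ 2 / alpha ^+ 2 + (2 / alpha + 2 / alpha ^+ 2) * (a ^+ 2 / eta) <= _).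
    have -> : a ^+ 2 / alpha ^+ 2 + (2 / alpha + 2 / alpha ^+ 2) * (a ^+ 2 / eta)
      = (a ^+ 2 * eta + (2 * alpha + 2) * a ^+ 2) / (alpha ^+ 2 * eta).
      by field; apply/andP; split; lra.
    rewrite ler_pdivlMr //; apply: mulr_gt0 => //; exact: exprn_gt0.
  rewrite lerD2l; apply: ler_wpM2l; first lra.
  apply: ler_wpM2l; first exact: sqr_ge0.
  by rewrite lef_pV2 ?posrE.
split; first exact: bound.
move=> hsch; exact: (@converge _ _ _ _ _ _ _ _ _ _ _ _ bound hsch).
Qed.
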